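(* Let $S_X,S_Y$ be finite nonempty action sets, $\lambda\in[0,1)$, and let $\varphi(s_X,s_Y)=\phi_X(s_X)+\phi_Y(s_Y)$ be additive, with $\phi_X:S_X\to\mathbb{R}$, $\phi_Y:S_Y\to\mathbb{R}$. Then there exists a $(\varphi,\lambda)$-autocratic behavioral strategy for $X$ if and only if $\Phi_X^+\neq\emptyset$, $\Phi_X^-\neq\emptyset$, and either (i) $\phi_X$ is constant, or (ii) $\phi_X$ is non-constant and $\lambda\ge\lambda_{\min}$, where $$\lambda_{\min}=\frac{\max_{s_Y\in S_Y}\phi_Y(s_Y)-\min_{s_Y\in S_Y}\phi_Y(s_Y)}{\max_{s_X\in S_X}\phi_X(s_X)-\min_{s_X\in S_X}\phi_X(s_X)}.$$
   Context: Two players $X,Y$ play a repeated game with finite action sets $S_X,S_Y$; $\Delta(S)$ denotes the probability distributions on $S$. $\varphi$ is extended to mixed actions in its first argument by $\varphi(\tau_X,s_Y)=\mathbb{E}_{s_X\sim\tau_X}[\varphi(s_X,s_Y)]$. Histories: $\mathcal{H}=\bigcup_{T\ge0}(S_X\times S_Y)^T$. A behavioral strategy for $X$ is a map $\sigma_X:\mathcal{H}\to\Delta(S_X)$, similarly for $Y$; players independently draw actions each round from their strategies evaluated at the history of realized action pairs, and $\mathbb{E}_{\sigma_X,\sigma_Y}$ is the expectation over the resulting play. $\sigma_X$ is $(\varphi,\lambda)$-autocratic if for every behavioral strategy $\sigma_Y$ of $Y$, $\mathbb{E}_{\sigma_X,\sigma_Y}\big[(1-\lambda)\sum_{t\ge0}\lambda^t\varphi(s_X^t,s_Y^t)\big]=0$.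 $\Phi_X^+=\{\tau_X\in\Delta(S_X):\min_{s_Y}\varphi(\tau_X,s_Y)\ge0\}$ and $\Phi_X^-=\{\tau_X\in\Delta(S_X):\max_{s_Y}\varphi(\tau_X,s_Y)\le0\}$. *)

(* Defs.v *)
From HB Require Import structures.
From mathcomp Require Import all_boot all_order all_algebra.
From mathcomp Require Import all_classical all_reals all_analysis.
Set Implicit Arguments. Unset Strict Implicit. Unset Printing Implicit Defensive.
Import Order.TTheory GRing.Theory Num.Theory numFieldNormedType.Exports.
Local Open Scope ring_scope.
Local Open Scope classical_set_scope.

Section Game.
Variables (R : realType) (SX SY : finType).

Definition is_dist (S : finType) (tau : {ffun S -> R}) : Prop :=
  (forall s, 0 <= tau s) /\ \sum_(s : S) tau s = 1.

(* histories: finite sequences of realized action pairs, in chronological order *)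
Definition history := seq (SX * SY).

Definition stratX := history -> {ffun SX -> R}.
Definition stratY := history -> {ffun SY -> R}.
Definition is_stratX (s : stratX) : Prop := forall h, is_dist (s h).
Definition is_stratY (s : stratY) : Prop := forall h, is_dist (s h).

(* probability that play continues along [h] given past history [past] *)
Fixpoint hprob (sX : stratX) (sY : stratY) (past : history) (h : history) : R :=
  match h with
  | [::] => 1
  | (x, y) :: h' => sX past x * sY past y * hprob sX sY (rcons past (x, y)) h'
  end.

Definition stage_payoff (phi : SX -> SY -> R) (sX : stratX) (sY : stratY)
    (t : nat) : R :=
  \sum_(h : t.-tuple (SX * SY))
     hprob sX sY [::] h *
     \sum_(x : SX) \sum_(y : SY) sX h x * sY h y * phi x y.

(* (phi,lambda)-autocratic: the expected normalized discounted sum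
   (1-lambda) sum_t lambda^t phi(s^t) equals 0 for every strategy of Y
   (the expectation of the series is the series of expectations, phi bounded) *)
Definition autocratic (phi : SX -> SY -> R) (lam : R) (sX : stratX) : Prop :=
  forall sY : stratY, is_stratY sY ->
    (fun n => \sum_(t < n) (1 - lam) * lam ^+ t * stage_payoff phi sX sY t)
      @ \oo --> (0 : R).

Definition phi_mixed (phi : SX -> SY -> R) (tau : {ffun SX -> R}) (y : SY) : R :=
  \sum_(x : SX) tau x * phi x y.

Definition PhiPlus (phi : SX -> SY -> R) : set {ffun SX -> R} :=
  [set tau | is_dist tau /\ forall y, 0 <= phi_mixed phi tau y].
Definition PhiMinus (phi : SX -> SY -> R) : set {ffun SX -> R} :=
  [set tau | is_dist tau /\ forall y, phi_mixed phi tau y <= 0].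

End Game.

Definition fmax (R : realType) (S : finType) (s0 : S) (f : S -> R) : R :=
  \big[Num.max/f s0]_(s : S) f s.
Definition fmin (R : realType) (S : finType) (s0 : S) (f : S -> R) : R :=
  \big[Num.min/f s0]_(s : S) f s.

Definition lambda_min (R : realType) (SX SY : finType) (x0 : SX) (y0 : SY)
    (phiX : SX -> R) (phiY : SY -> R) : R :=
  (fmax y0 phiY - fmin y0 phiY) / (fmax x0 phiX - fmin x0 phiX).

(* Main.v *)
Require Import Defs.
From HB Require Import structures.
From mathcomp Require Import all_boot all_order all_algebra.
From mathcomp Require Import all_classical all_reals all_analysis.
From mathcomp Require Import lra ring.
Import Order.TTheory GRing.Theory Num.Theory numFieldNormedType.Exports.
Local Open Scope ring_scope.
Local Open Scope classical_set_scope.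


Section Fin.
Variables (R : realType) (SX SY : finType).
Implicit Types (sX : stratX R SX SY) (sY : stratY R SX SY).

Lemma hprob_rcons sX sY past h x y :
  hprob sX sY past (rcons h (x, y)) =
  hprob sX sY past h * (sX (past ++ h) x * sY (past ++ h) y).
Proof.
elim: h past => [|[x' y'] h IH] past /=; first by rewrite cats0 mulr1 mul1r.
by rewrite IH -cat_rcons !mulrA.
Qed.

Lemma split_rcons (T : Type) (d : T) h z :
  belast (head d (rcons h z)) (behead (rcons h z)) = h /\
  last (head d (rcons h z)) (behead (rcons h z)) = z.
Proof.
case E: (rcons h z) => [|a s]; first by case: h E.
rewrite /=.
have := lastI a s; rewrite -E => /rcons_inj [-> ->].
by [].
Qed.

Lemma sum_tupleS (T : finType) (t : nat) (F : (t.+1).-tuple T -> R) :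
  \sum_(h : (t.+1).-tuple T) F h =
  \sum_(h : t.-tuple T) \sum_(z : T) F [tuple of rcons h z].
Proof.
rewrite pair_big /=.
rewrite (reindex (fun p : t.-tuple T * T => [tuple of rcons p.1 p.2])) //=.
exists (fun h : (t.+1).-tuple T => ([tuple of belast (head (thead h) h) (behead h)],
                                   last (head (thead h) h) (behead h))).
- move=> [h z] _ /=.
  have [E1 E2] := @split_rcons T (thead [tuple of rcons h z]) h z.
  congr pair; [apply: val_inj => /=; exact: E1 | exact: E2].
- move=> h _; apply: val_inj => /=.
  case: h => [[|a s] //= Hs].
  by rewrite -lastI.
Qed.

Lemma hprob_ge0 sX sY past h : is_stratX sX -> is_stratY sY ->
  0 <= hprob sX sY past h.
Proof.
move=> HX HY; elim: h past => [|[x y] h IH] past //=.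
by rewrite !mulr_ge0 //; [case: (HX past) | case: (HY past)].
Qed.

Lemma tower sX sY t (F : history SX SY -> R) :
  \sum_(h : (t.+1).-tuple (SX * SY)) hprob sX sY [::] h * F h =
  \sum_(h : t.-tuple (SX * SY)) hprob sX sY [::] h *
     \sum_(x : SX) \sum_(y : SY) sX h x * sY h y * F (rcons h (x, y)).
Proof.
rewrite sum_tupleS; apply: eq_bigr => h _.
rewrite pair_big /= big_distrr /=; apply: eq_bigr => [[x y]] _ /=.
by rewrite hprob_rcons /= !mulrA.
Qed.

Lemma total_prob sX sY t : is_stratX sX -> is_stratY sY ->
  \sum_(h : t.-tuple (SX * SY)) hprob sX sY [::] h = 1.
Proof.
move=> HX HY; elim: t => [|t IH].
  rewrite (big_pred1 [tuple]) // => h; apply/esym/eqP; apply: val_inj; by case: h => [[]].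
have := tower sX sY t (fun _ => 1).
under eq_bigr do rewrite mulr1.
move=> ->; rewrite -[RHS]IH; apply: eq_bigr => h _.
under eq_bigr do under eq_bigr do rewrite mulr1.
rewrite -[RHS]mulr1; congr (_ * _).
under eq_bigr do rewrite -mulr_sumr.
rewrite -mulr_suml; case: (HX h) => _ ->; case: (HY h) => _ ->.
by rewrite mulr1.
Qed.

Lemma hprob_ext sX sY sY' past h :
  (forall h'', (size h'' < size past + size h)%N -> sY h'' = sY' h'') ->
  hprob sX sY past h = hprob sX sY' past h.
Proof.
elim: h past => [|[x y] h IH] past //= E.
rewrite E ?addnS ?ltnS ?leq_addr // IH // => h'' H.
by apply: E; rewrite size_rcons addSn -addnS in H.
Qed.

End Fin.


Section Ana.
Variable R : realType.

Lemma geo_cvg0 (lam D : R) : 0 <= lam -> lam < 1 ->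
  (fun n : nat => lam ^+ n * D) @ \oo --> (0 : R).
Proof.
move=> l0 l1; rewrite -(mul0r D); apply: cvgMr_tmp; apply: cvg_expr.
by rewrite ger0_norm.
Qed.

Lemma le_of_geo (x lam D : R) : 0 <= lam -> lam < 1 ->
  (forall n, x <= lam ^+ n * D) -> x <= 0.
Proof.
move=> l0 l1 H; have := @geo_cvg0 lam D l0 l1 => /cvgr_to_ge; apply.
by near=> n; apply: H.
Unshelve. all: by end_near.
Qed.

Lemma le_lim_tail (u : nat -> R) (l x : R) (t : nat) :
  u @ \oo --> l -> (forall n, (t <= n)%N -> x <= u n) -> x <= l.
Proof.
move=> Hu H; apply: (cvgr_to_ge Hu).
near=> n; apply: H; near: n; exact: nbhs_infty_ge.
Unshelve. all: by end_near.
Qed.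

Lemma ge_lim_tail (u : nat -> R) (l x : R) (t : nat) :
  u @ \oo --> l -> (forall n, (t <= n)%N -> u n <= x) -> l <= x.
Proof.
move=> Hu H; apply: (cvgr_to_le Hu).
near=> n; apply: H; near: n; exact: nbhs_infty_ge.
Unshelve. all: by end_near.
Qed.

Lemma squeeze_geo (u : nat -> R) (lam C : R) : 0 <= lam -> lam < 1 ->
  (forall n, `|u n| <= lam ^+ n * C) -> u @ \oo --> (0 : R).
Proof.
move=> l0 l1 H.
apply: (@squeeze_cvgr _ _ _ _ (fun n => - (lam ^+ n * C)) (fun n => lam ^+ n * C)).
- near=> n; have := H n; rewrite ler_norml => /andP [h1 h2].
  by rewrite h1 h2.
- rewrite -oppr0; apply: cvgN; exact: geo_cvg0.
- exact: geo_cvg0.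
Unshelve. all: by end_near.
Qed.

End Ana.


Section Nec.
Variables (R : realType) (Y : eqType) (lam m M a b : R) (ya yb : Y) (g : Y -> R)
  (P : nat -> (nat -> Y) -> R).
Hypotheses (l0 : 0 <= lam) (l1 : lam < 1)
  (Pm : forall t q, m <= P t q <= M)
  (gab : forall y, a <= g y <= b) (ga : g ya = a) (gb : g yb = b)
  (loc : forall t q q', (forall s, (s < t)%N -> q s = q' s) -> P t q = P t q')
  (conv : forall q, (fun n => \sum_(t < n) (1 - lam) * lam ^+ t * (P t q + g (q t)))
             @ \oo --> (0 : R)).

Let w t q := P t q + g (q t).
Let Sig t q := \sum_(s < t) lam ^+ s * w s q.
Let upd (q : nat -> Y) t y := fun s => if s == t then y else q s.

Lemma Sig_loc t q q' : (forall s, (s < t)%N -> q s = q' s) -> Sig t q = Sig t q'.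
Proof.
move=> H; apply: eq_bigr => [[i Hi]] _ /=; rewrite /w (H i Hi); congr (_ * (_ + _)).
apply: loc => s Hs; apply: H; exact: ltn_trans Hs Hi.
Qed.

Lemma SigS t q : Sig t.+1 q = Sig t q + lam ^+ t * w t q.
Proof. by rewrite /Sig big_ord_recr. Qed.

Lemma lam0_case : lam = 0 -> [/\ 0 <= M + a, m + b <= 0 & b - a <= lam * (M - m)].
Proof.
move=> L0.
have W0 : forall q, w 0 q = 0.
  move=> q; have E : forall n, (1 <= n)%N ->
     \sum_(t < n) (1 - lam) * lam ^+ t * (P t q + g (q t)) = w 0 q.
    move=> [|n] // _; rewrite big_ord_recl /= L0 expr0 subr0 !mul1r big1 ?addr0 //.
    by move=> i _; rewrite expr0n /= mulr0 mul0r.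
  apply/eqP; rewrite eq_le; apply/andP; split.
    apply: (@le_lim_tail _ _ _ _ 1 (conv q)) => n Hn; by rewrite E.
  apply: (@ge_lim_tail _ _ _ _ 1 (conv q)) => n Hn; by rewrite E.
have E := @loc 0 (fun _ => ya) (fun _ => yb) (fun s (H : (s < 0)%N) => False_ind _ (notF H)).
have := W0 (fun _ => ya); have := W0 (fun _ => yb); rewrite /w ga gb E.
have := Pm 0 (fun _ => yb); case/andP => h1 h2.
rewrite L0 mul0r => h3 h4; split; lra.
Qed.


Section Pos.
Hypothesis lp : 0 < lam.
Let B : R := `|m| + `|M| + `|a| + `|b|.
Let Rr t q := - Sig t q / lam ^+ t.

Lemma w_bound t q : `|w t q| <= B.
Proof.
rewrite /w /B; have /andP[h1 h2] := Pm t q; have /andP[h3 h4] := gab (q t).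
have e1 := ler_norm M; have e2 := ler_norm b; have e3 := ler_norm (-m);
have e4 := ler_norm (-a); rewrite !normrN in e3 e4.
have := normr_ge0 m; have := normr_ge0 a; have := normr_ge0 b; have := normr_ge0 M.
rewrite ler_norml; move=> *; apply/andP; split; lra.
Qed.

Lemma B_ge0 : 0 <= B.
Proof. by rewrite /B !addr_ge0. Qed.

Lemma tail_bound q t n :
  (1 - lam) * `|Sig (t + n)%N q - Sig t q| <= lam ^+ t * B * (1 - lam ^+ n).
Proof.
elim: n => [|n IH]; first by rewrite addn0 subrr normr0 mulr0 expr0 subrr mulr0.
rewrite addnS SigS addrAC.
apply: (le_trans (y := (1 - lam) * `|Sig (t + n)%N q - Sig t q| +
                       (1 - lam) * (lam ^+ (t + n) * B))).
  rewrite -mulrDr; apply: ler_pM => //; first by rewrite subr_ge0 ltW.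
  apply: (le_trans (ler_normD _ _)); rewrite lerD2l normrM ger0_norm; last exact: exprn_ge0.
  by apply: ler_pM => //; rewrite ?exprn_ge0 // w_bound.
apply: (le_trans (lerD IH (lexx _))).
rewrite exprD exprS le_eqVlt; apply/orP; left; apply/eqP; ring.
Qed.

Lemma Sig_cvg q : (fun n => Sig n q) @ \oo --> (0 : R).
Proof.
have H := conv q.
have E : (fun n => \sum_(t < n) (1 - lam) * lam ^+ t * (P t q + g (q t))) =
         (fun n => (1 - lam) * Sig n q).
  by apply: funext => n; rewrite /Sig big_distrr; apply: eq_bigr => i _; rewrite /= /w mulrA.
rewrite E in H.
have H2 := @cvgMl_tmp _ _ _ _ _ ((1 - lam)^-1) _ H.
rewrite mulr0 in H2.
have E2 : (fun n => (1 - lam)^-1 * ((1 - lam) * Sig n q)) = (fun n => Sig n q).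
  apply: funext => n; rewrite mulrA mulVf ?mul1r //.
  by rewrite subr_eq0 eq_sym lt_eqF.
rewrite -E2; exact: H2.
Qed.

Lemma Sig_bound q t : (1 - lam) * `|Sig t q| <= lam ^+ t * B.
Proof.
have Hc : (fun n => (1 - lam) * `|Sig n q| + lam ^+ t * B) @ \oo --> lam ^+ t * B.
  rewrite -[X in _ --> X]add0r; apply: cvgD; last exact: cvg_cst.
  rewrite -(mulr0 (1 - lam)) -(@normr0 R R); apply: cvgMl_tmp; apply: cvg_norm.
  exact: Sig_cvg.
apply: (@le_lim_tail _ _ _ _ t Hc) => n Hn.
rewrite -(subnKC Hn).
set k := (n - t)%N.
have tb := tail_bound q t k.
have e : `|Sig t q| <= `|Sig (t + k)%N q| + `|Sig (t + k)%N q - Sig t q|.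
  have := ler_normB (Sig (t + k)%N q) (Sig (t + k)%N q - Sig t q).
  by rewrite (_ : Sig (t + k)%N q - (Sig (t + k)%N q - Sig t q) = Sig t q) //; ring.
have e2 : (1 - lam) * `|Sig t q| <= (1 - lam) * (`|Sig (t + k)%N q| + `|Sig (t + k)%N q - Sig t q|).
  by apply: ler_wpM2l => //; rewrite subr_ge0 ltW.
have p1 : 0 <= lam ^+ t * B * lam ^+ k.
  by rewrite !mulr_ge0 ?exprn_ge0 ?B_ge0 // ltW.
move: tb e2 p1; rewrite mulrDr /=; lra.
Qed.

Lemma R_bound q t : `|Rr t q| <= B / (1 - lam).
Proof.
have lt0 : 0 < lam ^+ t by rewrite exprn_gt0.
rewrite /Rr normrM normrN normfV (gtr0_norm lt0) ler_pdivrMr // mulrC.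
rewrite mulrA ler_pdivlMr ?subr_gt0 //.
rewrite [_ * (1 - lam)]mulrC; exact: (Sig_bound q t).
Qed.

Lemma R_rec t q : Rr t q = w t q + lam * Rr t.+1 q.
Proof.
rewrite /Rr SigS exprS; field.
by rewrite expf_neq0 // gt_eqF.
Qed.

Lemma R_loc t q q' : (forall s, (s < t)%N -> q s = q' s) -> Rr t q = Rr t q'.
Proof. by move=> H; rewrite /Rr (@Sig_loc t q q' H). Qed.

Let K : R := B / (1 - lam).
Let c : R := (M + a) / (1 - lam).
Let c' : R := (m + b) / (1 - lam).

Lemma c_eq : c - lam * c = M + a.
Proof. rewrite /c; field; by rewrite subr_eq0 eq_sym lt_eqF. Qed.
Lemma c'_eq : c' - lam * c' = m + b.
Proof. rewrite /c'; field; by rewrite subr_eq0 eq_sym lt_eqF. Qed.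

Lemma upd_lt q t y s : (s < t)%N -> q s = upd q t y s.
Proof. by rewrite /upd => /ltn_eqF ->. Qed.

Lemma R_upper n : forall t q, Rr t q - c <= lam ^+ n * (K - c).
Proof.
elim: n => [|n IH] t q.
  rewrite expr0 mul1r lerD2r; apply: le_trans (R_bound q t); exact: ler_norm.
pose q' := upd q t ya.
have E1 : Rr t q = Rr t q' by apply: R_loc => s; apply: upd_lt.
have E2 : w t q' = P t q' + a by rewrite /w /q' /upd eqxx ga.
have h := IH t.+1 q'.
have h2 : lam * (Rr t.+1 q' - c) <= lam * (lam ^+ n * (K - c)).
  by apply: ler_wpM2l.
have /andP [_ hP] := Pm t q'.
have ce := c_eq.
rewrite E1 R_rec E2 exprS -mulrA; rewrite mulrBr in h2; lra.
Qed.

Lemma R_lower n : forall t q, c' - Rr t q <= lam ^+ n * (K + c').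
Proof.
elim: n => [|n IH] t q.
  rewrite expr0 mul1r addrC lerD2r; apply: le_trans (R_bound q t).
  by rewrite -normrN; exact: ler_norm.
pose q' := upd q t yb.
have E1 : Rr t q = Rr t q' by apply: R_loc => s; apply: upd_lt.
have E2 : w t q' = P t q' + b by rewrite /w /q' /upd eqxx gb.
have h := IH t.+1 q'.
have h2 : lam * (c' - Rr t.+1 q') <= lam * (lam ^+ n * (K + c')).
  by apply: ler_wpM2l.
have /andP [hP _] := Pm t q'.
have ce := c'_eq.
rewrite E1 R_rec E2 exprS -mulrA; rewrite mulrBr in h2; lra.
Qed.

Lemma R_le_c t q : Rr t q <= c.
Proof.
rewrite -subr_le0; apply: (@le_of_geo _ _ lam (K - c)) => // n; exact: R_upper.
Qed.

Lemma R_ge_c' t q : c' <= Rr t q.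
Proof.
rewrite -subr_le0; apply: (@le_of_geo _ _ lam (K + c')) => // n; exact: R_lower.
Qed.

Lemma pos_case : [/\ 0 <= M + a, m + b <= 0 & b - a <= lam * (M - m)].
Proof.
pose qa := fun _ : nat => ya.
pose qb := upd qa 0 yb.
have R0 : forall q, Rr 0 q = 0 by move=> q; rewrite /Rr /Sig big_ord0 oppr0 mul0r.
have Ea := R_rec 0 qa; have Eb := R_rec 0 qb.
rewrite R0 in Ea; rewrite R0 in Eb.
have Pab : P 0 qa = P 0 qb by apply: loc.
have wa : w 0 qa = P 0 qa + a by rewrite /w /qa ga.
have wb : w 0 qb = P 0 qb + b by rewrite /w /qb /upd eqxx gb.
have h1 := R_le_c 0 qa; have h2 := R_ge_c' 0 qa.
have h3 := R_le_c 1 qa; have h4 := R_ge_c' 1 qb.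
have h5 : lam * Rr 1 qa <= lam * c by apply: ler_wpM2l.
have h6 : lam * c' <= lam * Rr 1 qb by apply: ler_wpM2l.
have ce := c_eq; have ce' := c'_eq.
rewrite R0 in h1 h2.
have l1' : 0 < 1 - lam by rewrite subr_gt0.
have Hc : 0 <= M + a.
  have : 0 <= c * (1 - lam) by rewrite mulr_ge0 // ltW.
  rewrite mulrBr mulr1 (mulrC c); lra.
have Hc' : m + b <= 0.
  have : c' * (1 - lam) <= 0 by rewrite mulr_le0_ge0 // ltW.
  rewrite mulrBr mulr1 (mulrC c'); lra.
split => //.
(* b - a = lam (R1 qa - R1 qb) <= lam (c - c') *)
have key : b - a <= lam * c - lam * c' by lra.
have : (b - a) * (1 - lam) <= (lam * c - lam * c') * (1 - lam).
  by apply: ler_wpM2r => //; rewrite ltW.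
have -> : (lam * c - lam * c') * (1 - lam) = lam * ((c - lam * c) - (c' - lam * c')).
  by ring.
rewrite ce ce'; nra.
Qed.

End Pos.

Lemma nec_main : [/\ 0 <= M + a, m + b <= 0 & b - a <= lam * (M - m)].
Proof.
move: l0; rewrite le_eqVlt => /orP [/eqP L|L].
  exact: lam0_case.
exact: pos_case.
Qed.

End Nec.


Section Suff.
Variables (R : realType) (SX SY : finType) (phiX : SX -> R) (phiY : SY -> R)
  (lam m M a b : R) (xM xm : SX) (y0 : SY).
Hypotheses (l0 : 0 <= lam) (l1 : lam < 1)
  (hX : forall x, m <= phiX x <= M) (hxM : phiX xM = M) (hxm : phiX xm = m)
  (hY : forall y, a <= phiY y <= b)
  (hmb : m + b <= 0) (hMa : 0 <= M + a) (hl : b - a <= lam * (M - m)).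

Variables (L U : R).
Hypotheses (hL : L - lam * L = m + b) (hU : U - lam * U = M + a)
  (L0 : L <= 0) (U0 : 0 <= U) (hUL : b - a <= lam * U - lam * L).
Ltac hyps := have := mM; have := ab; have := hL; have := hU; have := L0; have := U0;
  have := hUL; have := hl; have := hmb; have := hMa; have := l0; have := l1.

Definition pW (W : R) : R := Num.max m (W - a - lam * U).
Definition step (W : R) (y : SY) : R := (W - pW W - phiY y) / lam.
Definition Wf (h : history SX SY) : R := foldl (fun w (xy : SX * SY) => step w xy.2) 0 h.
Definition alpha (W : R) : R := (pW W - m) / (M - m).
Definition sXc : stratX R SX SY := fun h =>
  [ffun x => alpha (Wf h) * (x == xM)%:R + (1 - alpha (Wf h)) * (x == xm)%:R].

Let l1' : 0 < 1 - lam. Proof. by rewrite subr_gt0. Qed.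
Let mM : m <= M. Proof. by rewrite -hxm; case/andP: (hX xm). Qed.
Let ab : a <= b. Proof. by case/andP: (hY y0) => h1 h2; apply: le_trans h2. Qed.
Let pW_cases W : (pW W = m \/ pW W = W - a - lam * U) /\ m <= pW W /\ W - a - lam * U <= pW W.
Proof.
rewrite /pW /Num.max; case: ifP => h.
  by split; [right | split; [apply: ltW | ]].
by split; [left | split; [ | rewrite leNgt h]].
Qed.

Lemma pW_range W : L <= W <= U -> m <= pW W <= M.
Proof.
case/andP => h1 h2; have [[e|e] [p1 p2]] := pW_cases W; rewrite e; apply/andP; split; hyps; lra.
Qed.

Lemma step_range W y : L <= W <= U -> L <= step W y <= U.
Proof.
move=> hW; have /andP [h1 h2] := hW; have /andP [y1 y2] := hY y.
have [[e|e] [p1 p2]] := pW_cases W.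
all: move: l0; rewrite le_eqVlt => /orP [/eqP lz|lp].
- by rewrite /step -lz invr0 mulr0 L0 U0.
- rewrite /step ler_pdivlMr // ler_pdivrMr //; apply/andP; split; rewrite e; hyps; lra.
- by rewrite /step -lz invr0 mulr0 L0 U0.
- rewrite /step ler_pdivlMr // ler_pdivrMr //; apply/andP; split; rewrite e; hyps; lra.
Qed.

Lemma key W y : L <= W <= U -> pW W + phiY y = W - lam * step W y.
Proof.
move=> hW; have /andP [h1 h2] := hW; have /andP [y1 y2] := hY y.
move: l0; rewrite le_eqVlt => /orP [/eqP lz|lp].
  rewrite -lz mul0r subr0.
  have [[e|e] [p1 p2]] := pW_cases W; move: p1 p2; rewrite e; hyps;
  rewrite -lz ?mul0r ?subr0 => *; lra.
rewrite /step mulrC divfK ?gt_eqF //; ring.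
Qed.

Lemma Wf_rcons h xy : Wf (rcons h xy) = step (Wf h) xy.2.
Proof. by rewrite /Wf foldl_rcons. Qed.

Lemma Wf_range h : L <= Wf h <= U.
Proof.
elim/last_ind: h => [|h xy IH]; first by rewrite /Wf /= L0 U0.
by rewrite Wf_rcons; apply: step_range.
Qed.


Lemma alpha_range h : 0 <= alpha (Wf h) <= 1.
Proof.
have /andP [p1 p2] := @pW_range (Wf h) (Wf_range h).
rewrite /alpha; have := mM; rewrite le_eqVlt => /orP [/eqP e|lt].
  by rewrite -e subrr invr0 mulr0 lexx ler01.
apply/andP; split.
  by apply: divr_ge0; rewrite subr_ge0 // ltW.
by rewrite ler_pdivrMr ?subr_gt0 // mul1r lerD2r.
Qed.

Lemma sum_pick (S : finType) (f : S -> R) (c : S) :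
  \sum_(x : S) f x * (x == c)%:R = f c.
Proof.
rewrite (bigD1 c) //= eqxx mulr1 big1 ?addr0 // => x /negbTE ->.
by rewrite mulr0.
Qed.

Lemma sXc_strat : is_stratX sXc.
Proof.
move=> h; have /andP [a1 a2] := alpha_range h; split.
  move=> x; rewrite ffunE addr_ge0 // mulr_ge0 // ?ler0n // subr_ge0 //.
under eq_bigr do rewrite ffunE.
rewrite big_split /= !sum_pick.
by rewrite addrC subrK.
Qed.

Lemma sXc_mean h : \sum_(x : SX) sXc h x * phiX x = pW (Wf h).
Proof.
under eq_bigr do rewrite ffunE mulrDl !(mulrAC _ _ (phiX _)).
rewrite big_split /= !sum_pick hxM hxm.
have /andP [p1 p2] := @pW_range (Wf h) (Wf_range h).
rewrite /alpha; have := mM; rewrite le_eqVlt => /orP [/eqP e|lt].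
  rewrite -e subrr invr0 !(mulr0, subr0, mul1r, add0r).
  by apply: le_anti; rewrite p1 /= e.
have ne : M - m != 0 by rewrite subr_eq0 gt_eqF.
by field.
Qed.


Lemma dsum_y (p : {ffun SX -> R}) (q : {ffun SY -> R}) (G : SY -> R) :
  \sum_(x : SX) p x = 1 ->
  \sum_(x : SX) \sum_(y : SY) p x * q y * G y = \sum_(y : SY) q y * G y.
Proof.
move=> Hp; rewrite exchange_big /=; apply: eq_bigr => y _.
have -> : \sum_(x : SX) p x * q y * G y = (\sum_(x : SX) p x) * (q y * G y).
  by rewrite mulr_suml; apply: eq_bigr => x _; rewrite mulrA.
by rewrite Hp mul1r.
Qed.

Lemma dsum_x (p : {ffun SX -> R}) (q : {ffun SY -> R}) (F : SX -> R) :
  \sum_(y : SY) q y = 1 ->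
  \sum_(x : SX) \sum_(y : SY) p x * q y * F x = \sum_(x : SX) p x * F x.
Proof.
move=> Hq; apply: eq_bigr => x _.
have -> : \sum_(y : SY) p x * q y * F x = (\sum_(y : SY) q y) * (p x * F x).
  by rewrite mulr_suml; apply: eq_bigr => y _; ring.
by rewrite Hq mul1r.
Qed.

Lemma sum_const_sub (q : {ffun SY -> R}) (c : R) (G : SY -> R) :
  \sum_(y : SY) q y = 1 ->
  \sum_(y : SY) q y * (c - G y) = c - \sum_(y : SY) q y * G y.
Proof.
move=> Hq; under eq_bigr do rewrite mulrBr.
by rewrite sumrB -mulr_suml Hq mul1r.
Qed.

Definition EW (sY : stratY R SX SY) (t : nat) : R :=
  \sum_(h : t.-tuple (SX * SY)) hprob sXc sY [::] h * Wf h.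

Lemma stage_eq sY t : is_stratY sY ->
  stage_payoff (fun x y => phiX x + phiY y) sXc sY t = EW sY t - lam * EW sY t.+1.
Proof.
move=> HY; rewrite /EW tower mulr_sumr -sumrB /stage_payoff.
apply: eq_bigr => h _.
have [_ Hp] := sXc_strat h; have [_ Hq] := HY h.
set W := Wf h.
have E1 : \sum_(x : SX) \sum_(y : SY) sXc h x * sY h y * (phiX x + phiY y) =
          pW W + \sum_(y : SY) sY h y * phiY y.
  under eq_bigr do under eq_bigr do rewrite mulrDr.
  under eq_bigr do rewrite big_split /=.
  by rewrite big_split /= dsum_x // dsum_y // sXc_mean.
have E2 : \sum_(x : SX) \sum_(y : SY) sXc h x * sY h y * Wf (rcons h (x, y)) =
          \sum_(y : SY) sY h y * step W y.
  under eq_bigr do under eq_bigr do rewrite Wf_rcons /=.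
  by rewrite dsum_y.
rewrite E1 E2 mulrA (mulrC lam) -mulrA -mulrBr; congr (_ * _).
rewrite mulr_sumr.
have E3 : \sum_(y : SY) lam * (sY h y * step W y) = \sum_(y : SY) sY h y * (W - (pW W + phiY y)).
  apply: eq_bigr => y _; rewrite (@key W y (Wf_range h)); ring.
rewrite E3 sum_const_sub //.
rewrite opprB addrCA subrr addr0.
rewrite [RHS](eq_bigr (fun y => sY h y * pW W + sY h y * phiY y)); last by move=> y _ /=; ring.
by rewrite big_split /= -mulr_suml Hq mul1r.
Qed.


Lemma EW_range sY t : is_stratY sY -> L <= EW sY t <= U.
Proof.
move=> HY; have tp := @total_prob R SX SY sXc sY t sXc_strat HY.
have HL : L = \sum_(h : t.-tuple (SX * SY)) hprob sXc sY [::] h * L.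
  by rewrite -mulr_suml tp mul1r.
have HU : U = \sum_(h : t.-tuple (SX * SY)) hprob sXc sY [::] h * U.
  by rewrite -mulr_suml tp mul1r.
apply/andP; split.
  rewrite {1}HL; apply: ler_sum => h _; apply: ler_wpM2l.
    exact: (@hprob_ge0 R SX SY sXc sY [::] h sXc_strat HY).
  by case/andP: (Wf_range h).
rewrite {1}HU; apply: ler_sum => h _; apply: ler_wpM2l.
  exact: (@hprob_ge0 R SX SY sXc sY [::] h sXc_strat HY).
by case/andP: (Wf_range h).
Qed.

Lemma EW0 sY : EW sY 0 = 0.
Proof.
rewrite /EW big1 // => h _.
by rewrite (tuple0 h) /Wf /= mulr0.
Qed.

Lemma telescope sY n : is_stratY sY ->
  \sum_(t < n) (1 - lam) * lam ^+ t *
     stage_payoff (fun x y => phiX x + phiY y) sXc sY t =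
  - ((1 - lam) * lam ^+ n * EW sY n).
Proof.
move=> HY; elim: n => [|n IH]; first by rewrite big_ord0 EW0 mulr0 oppr0.
rewrite big_ord_recr /= IH stage_eq // exprS; ring.
Qed.

Lemma sXc_auto : autocratic (fun x y => phiX x + phiY y) lam sXc.
Proof.
move=> sY HY.
apply: (@squeeze_geo _ _ lam ((1 - lam) * (`|L| + `|U|))) => // n.
rewrite telescope // normrN.
rewrite (mulrC (1 - lam)) -mulrA normrM ger0_norm ?exprn_ge0 //.
apply: ler_wpM2l; first exact: exprn_ge0.
rewrite normrM ger0_norm; last by rewrite subr_ge0 ltW.
apply: ler_wpM2l; first by rewrite subr_ge0 ltW.
have /andP [e1 e2] := @EW_range sY n HY.
rewrite ler_norml; apply/andP; split.
  have := ler_norm L; have := ler_norm (- L); have := normr_ge0 U; rewrite normrN.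
  move=> *; lra.
have := ler_norm U; have := normr_ge0 L.
move=> *; lra.
Qed.

End Suff.


Lemma suff_main (R : realType) (SX SY : finType) (phiX : SX -> R) (phiY : SY -> R)
  (lam m M a b : R) (xM xm : SX) (y0 : SY) :
  0 <= lam -> lam < 1 -> (forall x, m <= phiX x <= M) -> phiX xM = M -> phiX xm = m ->
  (forall y, a <= phiY y <= b) -> m + b <= 0 -> 0 <= M + a -> b - a <= lam * (M - m) ->
  exists sX : stratX R SX SY, is_stratX sX /\
    autocratic (fun x y => phiX x + phiY y) lam sX.
Proof.
move=> l0 l1 hX hxM hxm hY hmb hMa hl.
have l1' : 0 < 1 - lam by rewrite subr_gt0.
have ne1 : 1 - lam != 0 by rewrite gt_eqF.
pose L := (m + b) / (1 - lam); pose U := (M + a) / (1 - lam).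
have hL : L - lam * L = m + b by rewrite /L; field.
have hU : U - lam * U = M + a by rewrite /U; field.
have L0 : L <= 0 by rewrite /L pmulr_lle0 // invr_gt0.
have U0 : 0 <= U by rewrite /U divr_ge0 // ltW.
have hUL : b - a <= lam * U - lam * L.
  have : (b - a) * (1 - lam) <= (lam * U - lam * L) * (1 - lam).
    have -> : (lam * U - lam * L) * (1 - lam) = lam * ((U - lam * U) - (L - lam * L)) by ring.
    rewrite hU hL.
    have -> : (b - a) * (1 - lam) = (b - a) - lam * (b - a) by ring.
    have -> : lam * (M + a - (m + b)) = lam * (M - m) - lam * (b - a) by ring.
    by rewrite lerD2r.
  by rewrite ler_pM2r.
exists (sXc R SX SY phiY lam m M a xM xm U); split.
  exact: (@sXc_strat R SX SY phiX phiY lam m M a b xM xm y0 l0 l1 hX hxm hY hmb hMa hl L U hL hU L0 U0 hUL).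
exact: (@sXc_auto R SX SY phiX phiY lam m M a b xM xm y0 l0 l1 hX hxM hxm hY hmb hMa hl L U hL hU L0 U0 hUL).
Qed.

Lemma fmax_spec (R : realType) (S : finType) (s0 : S) (f : S -> R) :
  (exists s, fmax s0 f = f s) /\ forall s, f s <= fmax s0 f.
Proof.
split.
  rewrite /fmax; elim/big_ind: _ => [|x y [sx ->] [sy ->]|s _]; first by exists s0.
    by rewrite /Num.max; case: ifP => _; [exists sy | exists sx].
  by exists s.
move=> s; rewrite /fmax (bigD1 s) //= le_max lexx //.
Qed.

Lemma fmin_spec (R : realType) (S : finType) (s0 : S) (f : S -> R) :
  (exists s, fmin s0 f = f s) /\ forall s, fmin s0 f <= f s.
Proof.
split.
  rewrite /fmin; elim/big_ind: _ => [|x y [sx ->] [sy ->]|s _]; first by exists s0.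
    by rewrite /Num.min; case: ifP => _; [exists sx | exists sy].
  by exists s.
move=> s; rewrite /fmin (bigD1 s) //= ge_min lexx //.
Qed.

Lemma sum_ind (R : realType) (S : finType) (c : S) : \sum_(x : S) ((x == c)%:R : R) = 1.
Proof. by rewrite (bigD1 c) //= eqxx big1 ?addr0 // => x /negbTE ->. Qed.

Lemma mean_range (R : realType) (S : finType) (p : {ffun S -> R}) (f : S -> R) (lo hi : R) :
  is_dist p -> (forall x, lo <= f x <= hi) -> lo <= \sum_(x : S) p x * f x <= hi.
Proof.
move=> [p0 p1] hf; apply/andP; split.
  rewrite -[lo]mul1r -p1 mulr_suml; apply: ler_sum => x _.
  by apply: ler_wpM2l => //; case/andP: (hf x).
rewrite -[hi]mul1r -p1 mulr_suml; apply: ler_sum => x _.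
by apply: ler_wpM2l => //; case/andP: (hf x).
Qed.

Lemma nec_wrap (R : realType) (SX SY : finType) (phiX : SX -> R) (phiY : SY -> R)
  (lam m M a b : R) (ya yb : SY) (sX : stratX R SX SY) :
  0 <= lam -> lam < 1 -> (forall x, m <= phiX x <= M) ->
  (forall y, a <= phiY y <= b) -> phiY ya = a -> phiY yb = b ->
  is_stratX sX -> autocratic (fun x y => phiX x + phiY y) lam sX ->
  [/\ 0 <= M + a, m + b <= 0 & b - a <= lam * (M - m)].
Proof.
move=> l0 l1 hX hY ga gb HX Ha.
pose sYq (q : nat -> SY) : stratY R SX SY := fun h => [ffun y => ((y == q (size h))%:R : R)].
have HYq : forall q, is_stratY (sYq q).
  move=> q h; split; first by move=> y; rewrite ffunE ler0n.
  by under eq_bigr do rewrite ffunE; rewrite sum_ind.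
pose P t q := \sum_(h : t.-tuple (SX * SY)) hprob sX (sYq q) [::] h * \sum_(x : SX) sX h x * phiX x.
have Pm : forall t q, m <= P t q <= M.
  move=> t q; have tp := @total_prob R SX SY sX (sYq q) t HX (HYq q).
  have hp : forall h : t.-tuple (SX * SY), 0 <= hprob sX (sYq q) [::] h.
    by move=> h; apply: hprob_ge0.
  have hm : forall h : t.-tuple (SX * SY), m <= \sum_(x : SX) sX h x * phiX x <= M.
    by move=> h; apply: mean_range.
  apply/andP; split.
    rewrite -[m]mul1r -tp mulr_suml; apply: ler_sum => h _; apply: ler_wpM2l => //.
    by case/andP: (hm h).
  rewrite -[M]mul1r -tp mulr_suml; apply: ler_sum => h _; apply: ler_wpM2l => //.
  by case/andP: (hm h).
have loc : forall t q q', (forall s, (s < t)%N -> q s = q' s) -> P t q = P t q'.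
  move=> t q q' H; apply: eq_bigr => h _; congr (_ * _).
  apply: hprob_ext => h'' Hs; rewrite /sYq H //.
  by rewrite size_tuple /= in Hs.
have stage : forall t q, stage_payoff (fun x y => phiX x + phiY y) sX (sYq q) t = P t q + phiY (q t).
  move=> t q; have tp := @total_prob R SX SY sX (sYq q) t HX (HYq q).
  rewrite /stage_payoff /P -[phiY (q t)]mul1r -tp mulr_suml -big_split /=.
  apply: eq_bigr => h _; rewrite -mulrDr; congr (_ * _).
  have [_ Hs] := HX h.
  have E : forall x, \sum_(y : SY) sX h x * sYq q h y * (phiX x + phiY y) = sX h x * (phiX x + phiY (q t)).
    move=> x; under eq_bigr do rewrite ffunE mulrAC.
    by rewrite sum_pick size_tuple.
  under eq_bigr do rewrite E mulrDr.
  by rewrite big_split /= -mulr_suml Hs mul1r.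
have conv : forall q, (fun n => \sum_(t < n) (1 - lam) * lam ^+ t * (P t q + phiY (q t))) @ \oo --> (0 : R).
  move=> q; have := Ha (sYq q) (HYq q).
  suff -> : (fun n => \sum_(t < n) (1 - lam) * lam ^+ t * (P t q + phiY (q t))) =
    (fun n => \sum_(t < n) (1 - lam) * lam ^+ t * stage_payoff (fun x y => phiX x + phiY y) sX (sYq q) t) by [].
  by apply: funext => n; apply: eq_bigr => t _; rewrite stage.
exact: (@nec_main R SY lam m M a b ya yb phiY P l0 l1 Pm hY ga gb loc conv).
Qed.

Theorem proposition5 (R : realType) (SX SY : finType) (x0 : SX) (y0 : SY)
    (lam : R) (phiX : SX -> R) (phiY : SY -> R) :
  0 <= lam -> lam < 1 ->
  let phi := fun (x : SX) (y : SY) => phiX x + phiY y in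
  (exists sX : stratX R SX SY, is_stratX sX /\ autocratic phi lam sX) <->
  (PhiPlus phi !=set0 /\ PhiMinus phi !=set0 /\
   ((forall x x' : SX, phiX x = phiX x') \/
    (~ (forall x x' : SX, phiX x = phiX x') /\
     lambda_min x0 y0 phiX phiY <= lam))).
Proof.
move=> l0 l1 phi; rewrite /lambda_min.
have [[xM eM] hM] := fmax_spec _ _ x0 phiX; have [[xm em] hm] := fmin_spec _ _ x0 phiX.
have [[yb eb] hb] := fmax_spec _ _ y0 phiY; have [[ya ea] ha] := fmin_spec _ _ y0 phiY.
move: eM hM em hm eb hb ea ha.
set M := fmax x0 phiX; set m := fmin x0 phiX; set b := fmax y0 phiY; set a := fmin y0 phiY.
move=> eM hM em hm eb hb ea ha; clearbody M m b a.
have hX : forall x, m <= phiX x <= M by move=> x; rewrite hm hM.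
have hY : forall y, a <= phiY y <= b by move=> y; rewrite ha hb.
have mean : forall (tau : {ffun SX -> R}) y, is_dist tau ->
    phi_mixed phi tau y = \sum_(x : SX) tau x * phiX x + phiY y.
  move=> tau y [_ H1]; rewrite /phi_mixed /phi.
  under eq_bigr do rewrite mulrDr.
  by rewrite big_split /= -mulr_suml H1 mul1r.
have dM : is_dist [ffun x : SX => ((x == xM)%:R : R)].
  by split; [move=> x; rewrite ffunE ler0n | under eq_bigr do rewrite ffunE; rewrite sum_ind].
have dm : is_dist [ffun x : SX => ((x == xm)%:R : R)].
  by split; [move=> x; rewrite ffunE ler0n | under eq_bigr do rewrite ffunE; rewrite sum_ind].
have meanpick : forall c, \sum_(x : SX) [ffun x : SX => ((x == c)%:R : R)] x * phiX x = phiX c.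
  by move=> c; under eq_bigr do rewrite ffunE mulrC; rewrite sum_pick.
split.
- move=> [sX [HX Ha]].
  have [c1 c2 c3] := @nec_wrap R SX SY phiX phiY lam m M a b ya yb sX l0 l1 hX hY
                       (esym ea) (esym eb) HX Ha.
  split; [|split].
  + exists [ffun x : SX => ((x == xM)%:R : R)]; split => // y.
    rewrite mean // meanpick // -eM; apply: le_trans c1 _; rewrite lerD2l.
    by case/andP: (hY y).
  + exists [ffun x : SX => ((x == xm)%:R : R)]; split => // y.
    rewrite mean // meanpick // -em; apply: le_trans _ c2; rewrite lerD2l.
    by case/andP: (hY y).
  + case: (pselect (forall x x' : SX, phiX x = phiX x')) => hc; [by left | right].
    split => //.
    have Mm : m < M.
      have mM : m <= M by case/andP: (hX xm) => h1 h2; apply: le_trans h1 h2.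
      rewrite lt_neqAle mM andbT.
      apply/negP => /eqP e; apply: hc => x x'.
      have := hX x; have := hX x'; rewrite -e => /andP [h1 h2] /andP [h3 h4].
      by apply/eqP; rewrite eq_le (le_trans h4 h1) (le_trans h2 h3).
    by rewrite ler_pdivrMr ?subr_gt0 // mulrC.
- move=> [[tau [Htau Hp]] [[tau' [Htau' Hm]] Hdisj]].
  have hMa : 0 <= M + a.
    have := Hp ya; rewrite mean // -ea => h; apply: le_trans h _; rewrite lerD2r.
    by case/andP: (mean_range _ _ _ _ _ _ Htau hX).
  have hmb : m + b <= 0.
    have := Hm yb; rewrite mean // -eb => h; apply: le_trans _ h; rewrite lerD2r.
    by case/andP: (mean_range _ _ _ _ _ _ Htau' hX).
  have hl : b - a <= lam * (M - m).
    case: Hdisj => [hc | [hc hlam]].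
      have e : M = m by rewrite eM em (hc xM xm).
      rewrite e subrr mulr0; rewrite e in hMa; lra.
    have Mm : m < M.
      have mM : m <= M by case/andP: (hX xm) => h1 h2; apply: le_trans h1 h2.
      rewrite lt_neqAle mM andbT.
      apply/negP => /eqP e; apply: hc => x x'.
      have := hX x; have := hX x'; rewrite -e => /andP [h1 h2] /andP [h3 h4].
      by apply/eqP; rewrite eq_le (le_trans h4 h1) (le_trans h2 h3).
    by move: hlam; rewrite ler_pdivrMr ?subr_gt0 // mulrC.
  exact: (@suff_main R SX SY phiX phiY lam m M a b xM xm y0 l0 l1 hX (esym eM) (esym em)
            hY hmb hMa hl).
Qed.
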